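(* Let $q$ be a prime power, let $k\geq 2$ and $r>4$ be integers, and let $n=rk$. Let $\gamma\in\mathbb{F}_{q^n}$ be a root of an irreducible polynomial of degree $r$ over $\mathbb{F}_{q^k}$. For each pair $(\tau,\delta)\in\mathbb{F}_{q^k}^*\times\mathbb{F}_{q^k}^*$ let $$U_{\tau,\delta}=\{u+(u^q+u)\tau\gamma+(u^q+u)\delta\gamma^2\mid u\in\mathbb{F}_{q^k}\},$$ and list these $(q^k-1)^2$ subspaces as $U_1,\dots,U_{(q^k-1)^2}$. Then the code $$\mathcal{C}=\bigcup_{i=1}^{(q^k-1)^2}\{\alpha U_i\mid\alpha\in\mathbb{F}_{q^n}^*\}$$ is a cyclic constant dimension subspace code with cardinality $(q^k-1)^2\frac{q^n-1}{q-1}$ and minimum distance $2k-2$.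
   Context: $\mathbb{F}_{q^n}$ is viewed as an $n$-dimensional vector space over $\mathbb{F}_q$. For $\mathbb{F}_q$-subspaces $U,V$ of $\mathbb{F}_{q^n}$, the subspace distance is $d(U,V)=\dim U+\dim V-2\dim(U\cap V)$. A subspace code is a nonempty set of $\mathbb{F}_q$-subspaces of $\mathbb{F}_{q^n}$; it is constant dimension if all its members have the same dimension; its minimum distance is $\min\{d(U,V)\mid U,V\in\mathcal{C},U\neq V\}$. The orbit of $U$ is $\{\alpha U\mid\alpha\in\mathbb{F}_{q^n}^*\}$, and a code is cyclic if it is a union of orbits. *)

(* Defs.v *)
From HB Require Import structures.
From mathcomp Require Import all_boot all_order all_algebra all_field.
Set Implicit Arguments. Unset Strict Implicit. Unset Printing Implicit Defensive.
Import GRing.Theory.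
Local Open Scope ring_scope.

(* Setting: F is a finite field of order q (q = #|F|, a prime power);
   L is a finite extension of F (so L = F_{q^n}, n = \dim {:L});
   F_q-subspaces of L are the elements of {vspace L}. *)

Definition subspace_dist (F : fieldType) (L : vectType F) (U V : {vspace L}) : nat :=
  (\dim U + \dim V - 2 * \dim (U :&: V))%N.

Definition vmul (F : fieldType) (L : fieldExtType F) (a : L) (U : {vspace L})
  : {vspace L} := (amull a @: U)%VS.

Definition orbit_of (F : fieldType) (L : fieldExtType F) (U V : {vspace L}) : Prop :=
  exists2 a : L, a != 0 & V = vmul a U.

Definition code_nonempty (F : fieldType) (L : vectType F) (C : {vspace L} -> Prop) :=
  exists V, C V.

Definition constant_dimension (F : fieldType) (L : vectType F) (C : {vspace L} -> Prop) :=
  exists d : nat, forall V, C V -> \dim V = d.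

Definition cyclic_code (F : fieldType) (L : fieldExtType F) (C : {vspace L} -> Prop) :=
  exists S : {vspace L} -> Prop, forall V, C V <-> exists2 U, S U & orbit_of U V.

Definition code_card (F : fieldType) (L : vectType F) (C : {vspace L} -> Prop) (N : nat) :=
  exists s : seq {vspace L}, [/\ uniq s, size s = N & forall V, (V \in s) <-> C V].

Definition min_distance (F : fieldType) (L : vectType F) (C : {vspace L} -> Prop) (d : nat) :=
  (exists U V, [/\ C U, C V, U != V & subspace_dist U V = d]) /\
  (forall U V, C U -> C V -> U != V -> (d <= subspace_dist U V)%N).

(* U_{tau,delta} = { u + (u^q+u) tau gamma + (u^q+u) delta gamma^2 | u in K },
   where q = #|F|.  The map is F-linear, so linfun gives exactly it. *)
Definition Utd (F : finFieldType) (L : fieldExtType F) (K : {vspace L})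
  (gamma tau delta : L) : {vspace L} :=
  (linfun (fun u : L => u + (u ^+ #|F| + u) * tau * gamma
                          + (u ^+ #|F| + u) * delta * gamma ^+ 2) @: K)%VS.

Definition code3p6 (F : finFieldType) (L : fieldExtType F) (K : {vspace L})
  (gamma : L) (V : {vspace L}) : Prop :=
  exists tau delta : L,
    [/\ tau \in K, tau != 0, delta \in K, delta != 0 & orbit_of (Utd K gamma tau delta) V].

(* Main.v *)
Require Import Defs.
From HB Require Import structures.
From mathcomp Require Import all_boot all_order all_algebra all_fingroup all_solvable all_field.
From mathcomp Require Import ring zify.
From Stdlib Require Import Classical.
Set Implicit Arguments. Unset Strict Implicit. Unset Printing Implicit Defensive.
Import GRing.Theory.
Local Open Scope ring_scope.

Lemma count_enumP (T : finType) (P a : pred T) : count a (enum P) = #|[pred x | P x && a x]|.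
Proof. by rewrite cardE /enum_mem size_filter count_filter; apply: eq_count => x; rewrite !inE andbC. Qed.

Lemma iterop_addn n : iterop n addn 1%N 0%N = n.
Proof. by case: n => // n; rewrite iteropS iter_addn mul1n addn1. Qed.

Lemma size_undup_const (T : eqType) (s : seq T) m :
  (forall x, x \in s -> count_mem x s = m) -> size s = (size (undup s) * m)%N.
Proof.
move=> h; have := big_undup_iterop_count addn s predT (fun _ => 1%N).
rewrite sum1_size => <-.
rewrite (eq_big_seq (fun _ => m)); last first.
  by move=> x; rewrite mem_undup => xs; rewrite h // iterop_addn.
by rewrite big_const_seq count_predT iter_addn_0 mulnC.
Qed.

Ltac kin := repeat first [ done | assumption | rewrite rpredN | rewrite rpredV | rewrite rpredD | rewrite rpredB | rewrite rpredM | rewrite rpredX | rewrite rpred_div | rewrite rpred0 | rewrite rpred1 ].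

Section S.
Variables (F : finFieldType) (L : fieldExtType F).
Local Notation q := #|F|.

Lemma frob_pnat : [pchar L].-nat q.
Proof.
have [p pp pc] := finPcharP F.
have := fin_ring_pchar_abelem pc.
move/abelem_pgroup; rewrite /pgroup cardsT => pn.
apply: sub_in_pnat pn => x _ /eqP ->.
by rewrite (pchar_lalg L).
Qed.

Lemma frobD (x y : L) : (x + y) ^+ q = x ^+ q + y ^+ q.
Proof. exact: exprDn_pchar frob_pnat. Qed.

Lemma frobZ (c : F) (x : L) : (c *: x) ^+ q = c *: x ^+ q.
Proof. by rewrite -[c *: x]mulr_algl -[RHS]mulr_algl exprMn -in_algE -rmorphXn /= expf_card. Qed.

Lemma frobF (x : L) : (x ^+ q == x) = (x \in 1%VS).
Proof.
have := Fermat's_little_theorem (1%AS : {subfield L}) x.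
rewrite /= dimv1 expn1 => ->. by []. Qed.

Lemma ring_test (a b : L) : (a + b) * (a - b) = a ^+ 2 - b ^+ 2.
Proof. ring. Qed.

Definition th (t d g : L) (u : L) : L :=
  u + (u ^+ q + u) * t * g + (u ^+ q + u) * d * g ^+ 2.

Lemma th_lin (t d g : L) : linear (th t d g).
Proof.
move=> c x y; rewrite /th frobD frobZ.
rewrite -(mulr_algl c (x ^+ q)) -(mulr_algl c x).
rewrite -(mulr_algl c (_ + _ + _)). ring.
Qed.

HB.instance Definition _ (t d g : L) :=
  GRing.isLinear.Build F L L *:%R (th t d g) (th_lin t d g).

Lemma UtdE (K : {vspace L}) g t d : Utd K g t d = (linfun (th t d g) @: K)%VS.
Proof. by []. Qed.

Lemma memUtd (K : {vspace L}) g t d w :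
  reflect (exists2 u, u \in K & w = th t d g u) (w \in Utd K g t d).
Proof.
rewrite UtdE; apply: (iffP memv_imgP) => -[u uK ->]; exists u => //; by rewrite lfunE.
Qed.

Lemma vmulE (a : L) (U : {vspace L}) w :
  reflect (exists2 u, u \in U & w = a * u) (w \in vmul a U).
Proof.
rewrite /vmul; apply: (iffP memv_imgP) => -[u uK ->]; exists u => //; by rewrite lfunE.
Qed.

Lemma adj_deg (K : {subfield L}) (g : L) (p : {poly subvs_of K}) r :
  irreducible_poly p -> size p = r.+1 -> root (map_poly vsval p) g ->
  adjoin_degree K g = r.
Proof.
move=> [p_gt1 irr] sp rg.
have pO : map_poly vsval p \is a polyOver K by apply/polyOver_subvs; exists p.
have [m eqm] := polyOver_subvs (minPolyOver K g).
have := minPoly_dvdp pO rg; rewrite eqm dvdp_map => mdp.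
have sm : size (minPoly K g) = size m by rewrite eqm size_map_poly.
have a0 : (0 < adjoin_degree K g)%N.
  by rewrite adjoin_degreeE divn_gt0 ?adim_gt0 // dimvS ?subv_adjoin.
have : size m != 1%N by rewrite -sm size_minPoly; move: a0; case: (adjoin_degree K g).
move/irr/(_ mdp)/eqp_size; rewrite -sm size_minPoly sp.
by case.
Qed.

Lemma indep5 (K : {subfield L}) g c0 c1 c2 c3 c4 :
  (5 <= adjoin_degree K g)%N ->
  c0 \in K -> c1 \in K -> c2 \in K -> c3 \in K -> c4 \in K ->
  c0 + c1 * g + c2 * g ^+ 2 + c3 * g ^+ 3 + c4 * g ^+ 4 = 0 ->
  [/\ c0 = 0, c1 = 0, c2 = 0, c3 = 0 & c4 = 0].
Proof.
move=> a5 K0 K1 K2 K3 K4 e.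
pose s := [:: c0; c1; c2; c3; c4].
pose P := \poly_(i < 5) nth 0 s i.
have PO : P \is a polyOver K.
  apply/polyOverP => i; rewrite coef_poly; case: ifP => _; last exact: mem0v.
  by case: i => [|[|[|[|[|i]]]]] //=; rewrite nth_nil mem0v.
have sP : (size P <= adjoin_degree K g)%N by apply: leq_trans (size_poly _ _) a5.
have Pg : P.[g] = 0.
  rewrite horner_poly !big_ord_recl big_ord0 /=; apply: etrans e; ring.
have := Fadjoin_poly_unique PO sP Pg; rewrite linear0 => P0.
have c j : nth 0 s j = 0.
  have := congr1 (fun p : {poly L} => p`_j) P0; rewrite coef0 coef_poly.
  case: ifP => // /negbT; rewrite -leqNgt => j5 _; by rewrite nth_default.
by split; [exact: (c 0%N) | exact: (c 1%N) | exact: (c 2%N) | exact: (c 3%N) | exact: (c 4%N)].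
Qed.

Lemma q_gt0 : (0 < q)%N.
Proof. exact: ltnW (finNzRing_gt1 F). Qed.

Lemma th0 t d g : th t d g 0 = 0.
Proof. by rewrite /th expr0n /= eqn0Ngt q_gt0 /= !(addr0, mul0r). Qed.

Lemma th_nz (K : {subfield L}) g t d u :
  (5 <= adjoin_degree K g)%N -> t \in K -> d \in K -> u \in K -> u != 0 ->
  th t d g u != 0.
Proof.
move=> a5 tK dK uK; apply: contra => /eqP e.
have [] := @indep5 K g u ((u ^+ q + u) * t) ((u ^+ q + u) * d) 0 0 a5; kin.
  by apply: (etrans _ e); rewrite /th; ring.
by move=> -> _ _ _ _.
Qed.

Lemma key (K : {subfield L}) g t d t' d' al be u1 u2 v1 v2 :
  (5 <= adjoin_degree K g)%N ->
  t \in K -> d \in K -> t' \in K -> d' \in K -> d != 0 -> d' != 0 ->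
  al != 0 -> be != 0 ->
  u1 \in K -> u2 \in K -> v1 \in K -> v2 \in K ->
  al * th t d g u1 = be * th t' d' g v1 ->
  al * th t d g u2 = be * th t' d' g v2 ->
  u1 != 0 -> u1 ^+ q * u2 != u1 * u2 ^+ q ->
  [/\ t = t', d = d' & exists c : F, al = c%:A * be].
Proof.
move=> a5 tK dK t'K d'K d0 d'0 al0 be0 u1K u2K v1K v2K h1 h2 u10 nd.
have P : th t d g u1 * th t' d' g v2 = th t d g u2 * th t' d' g v1.
  apply/eqP; rewrite -subr_eq0; apply/eqP.
  have : (al * be) * (th t d g u1 * th t' d' g v2 - th t d g u2 * th t' d' g v1) = 0.
    have -> : (al * be) * (th t d g u1 * th t' d' g v2 - th t d g u2 * th t' d' g v1)
       = (al * th t d g u1) * (be * th t' d' g v2) - (be * th t' d' g v1) * (al * th t d g u2) by ring.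
    by rewrite h1 h2; ring.
  by move/eqP; rewrite mulf_eq0 mulf_eq0 (negbTE al0) (negbTE be0) /= => /eqP.
move: P; rewrite /th.
set a1 := u1 ^+ q + u1; set a2 := u2 ^+ q + u2.
set b1 := v1 ^+ q + v1; set b2 := v2 ^+ q + v2.
have a1K : a1 \in K by rewrite /a1; kin.
have a2K : a2 \in K by rewrite /a2; kin.
have b1K : b1 \in K by rewrite /b1; kin.
have b2K : b2 \in K by rewrite /b2; kin.
move=> P.
have [e0 e1 e2 e3 e4] := @indep5 K g (u1 * v2 - u2 * v1)
  (u1 * b2 * t' + a1 * v2 * t - u2 * b1 * t' - a2 * v1 * t)
  (u1 * b2 * d' + a1 * b2 * t * t' + a1 * v2 * d - (u2 * b1 * d' + a2 * b1 * t * t' + a2 * v1 * d))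
  ((a1 * b2 - a2 * b1) * (t * d' + d * t'))
  ((a1 * b2 - a2 * b1) * (d * d')) a5 ltac:(kin) ltac:(kin) ltac:(kin) ltac:(kin) ltac:(kin)
  ltac:(apply: etrans (_ : _ = (u1 + a1 * t * g + a1 * d * g ^+ 2) * (v2 + b2 * t' * g + b2 * d' * g ^+ 2) -
     (u2 + a2 * t * g + a2 * d * g ^+ 2) * (v1 + b1 * t' * g + b1 * d' * g ^+ 2)) _; [ring | by rewrite P subrr]).
have v10 : v1 != 0.
  apply: contraNneq (th_nz a5 tK dK u1K u10) => v10.
  by move: h1; rewrite v10 th0 mulr0 => /eqP; rewrite mulf_eq0 (negbTE al0).
pose la := v1 / u1.
have ev1 : v1 = la * u1 by rewrite /la mulfVK.
have ev2 : v2 = la * u2.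
  apply/(mulfI u10); rewrite /la; move/eqP: e0; rewrite subr_eq0 => /eqP e0.
  by rewrite e0; field.
have la0 : la != 0 by rewrite /la mulf_neq0 ?invr_eq0.
clearbody la.
have eb1 : b1 = la ^+ q * u1 ^+ q + la * u1 by rewrite /b1 ev1 exprMn.
have eb2 : b2 = la ^+ q * u2 ^+ q + la * u2 by rewrite /b2 ev2 exprMn.
have nd' : u1 ^+ q * u2 - u1 * u2 ^+ q != 0 by rewrite subr_eq0.
have laq : la ^+ q = la.
  have : (a1 * b2 - a2 * b1) * (d * d') = (la - la ^+ q) * (u1 ^+ q * u2 - u1 * u2 ^+ q) * (d * d').
    by rewrite eb1 eb2 /a1 /a2; ring.
  rewrite e4 => /esym /eqP; rewrite !mulf_eq0 (negbTE nd') (negbTE d0) (negbTE d'0) !orbF subr_eq0.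
  by move/eqP.
have tt : t = t'.
  have : u1 * b2 * t' + a1 * v2 * t - u2 * b1 * t' - a2 * v1 * t =
     la * (t - t') * (u1 ^+ q * u2 - u1 * u2 ^+ q).
    by rewrite eb1 eb2 ev1 ev2 laq /a1 /a2; ring.
  rewrite e1 => /esym /eqP; rewrite !mulf_eq0 (negbTE nd') (negbTE la0) orbF /= subr_eq0.
  by move/eqP.
have dd : d = d'.
  have : u1 * b2 * d' + a1 * b2 * t * t' + a1 * v2 * d - (u2 * b1 * d' + a2 * b1 * t * t' + a2 * v1 * d) =
     la * (d - d') * (u1 ^+ q * u2 - u1 * u2 ^+ q).
    by rewrite eb1 eb2 ev1 ev2 laq /a1 /a2; ring.
  rewrite e2 => /esym /eqP; rewrite !mulf_eq0 (negbTE nd') (negbTE la0) orbF /= subr_eq0.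
  by move/eqP.
split => //.
have : la \in <[1]>%VS.
  by have := frobF la; rewrite laq eqxx => <-.
move/vlineP => [c ec].
exists c.
have thu : th t d g u1 != 0 by exact: th_nz a5 tK dK u1K u10.
apply: (mulIf thu).
rewrite h1 -tt -dd ev1 (_ : th t d g (la * u1) = la * th t d g u1).
  by rewrite ec; ring.
by rewrite /th exprMn laq; ring.
Qed.

Lemma thZ t d g (rho u : L) : rho ^+ q = rho -> th t d g (rho * u) = rho * th t d g u.
Proof. by move=> rq; rewrite /th exprMn rq; ring. Qed.

Lemma fixF (rho : L) : rho ^+ q = rho -> exists c : F, rho = c%:A.
Proof.
move=> rq; have : rho \in <[1]>%VS by have := frobF rho; rewrite rq eqxx => <-.
by move/vlineP => [c ->]; exists c.
Qed.

Lemma main (K : {subfield L}) g t d t' d' al be :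
  (5 <= adjoin_degree K g)%N ->
  t \in K -> d \in K -> t' \in K -> d' \in K -> d != 0 -> d' != 0 ->
  al != 0 -> be != 0 ->
  (\dim (vmul al (Utd K g t d) :&: vmul be (Utd K g t' d')) <= 1)%N \/
  [/\ t = t', d = d' & exists c : F, al = c%:A * be].
Proof.
move=> a5 tK dK t'K d'K d0 d'0 al0 be0.
case: (classic [/\ t = t', d = d' & exists c : F, al = c%:A * be]) => [h|nh]; [by right | left].
set W := (_ :&: _)%VS.
have [->|Wn0] := eqVneq W 0%VS; first by rewrite dimv0.
have w1W : vpick W \in W := memv_pick W.
have w10 : vpick W != 0 by rewrite vpick0.
suff : (W <= <[vpick W]>)%VS by move/dimvS; rewrite dim_vline w10.
move: w1W w10; set w1 := vpick W => w1W w10.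
clearbody w1.
move: w1W; rewrite memv_cap => /andP [/vmulE [x1 /memUtd [u1 u1K ex1] ew1] /vmulE [y1 /memUtd [v1 v1K ey1]] e1].
subst x1 y1 w1.
apply/subvP => w; rewrite memv_cap => /andP [/vmulE [x /memUtd [u uK ex] ew] /vmulE [y /memUtd [v vK ey]] e].
subst x y w.
have u10 : u1 != 0 by apply: contraNneq w10 => ->; rewrite th0 mulr0.
have [eq1|neq] := eqVneq (u1 ^+ q * u) (u1 * u ^+ q); last first.
  by case: nh; apply: (key a5 tK dK t'K d'K d0 d'0 al0 be0 u1K uK v1K vK e1 e u10 neq).
pose rho := u / u1.
have rq : rho ^+ q = rho.
  rewrite /rho expr_div_n; apply/(mulIf (expf_neq0 q u10)); rewrite mulfVK ?expf_neq0 //.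
  by apply/(mulfI u10); rewrite -eq1; field.
have [c ec] := fixF rq.
have -> : u = rho * u1 by rewrite /rho mulfVK.
rewrite thZ // mulrCA ec mulr_algl.
by apply: memvZ; apply: memv_line.
Qed.

Lemma vmulZ (c : F) (b : L) (U : {vspace L}) : c != 0 -> vmul (c%:A * b) U = vmul b U.
Proof.
move=> c0; apply/vspaceP => w; apply/vmulE/vmulE => -[u uU ->].
  by exists (c *: u); [exact: memvZ | rewrite -[c *: u]mulr_algl; ring].
exists (c^-1 *: u); first exact: memvZ.
have h : c^-1%:A * c%:A = 1 :> L by rewrite -scalerAl mul1r scalerA mulVf // scale1r.
rewrite -[c^-1 *: u]mulr_algl; transitivity (b * u * (c^-1%:A * c%:A)); first by rewrite h mulr1.
ring.
Qed.

Lemma dim_vmul (a : L) (U : {vspace L}) : a != 0 -> \dim (vmul a U) = \dim U.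
Proof.
move=> a0; apply: limg_dim_eq; apply/eqP; rewrite -subv0; apply/subvP => x.
rewrite memv_cap memv_ker lfunE /= => /andP [_]; rewrite mulf_eq0 (negbTE a0) /=.
by move/eqP ->; rewrite memv0.
Qed.

Lemma dim_Utd (K : {subfield L}) g t d : (5 <= adjoin_degree K g)%N ->
  t \in K -> d \in K -> \dim (Utd K g t d) = \dim K.
Proof.
move=> a5 tK dK; rewrite UtdE; apply: limg_dim_eq; apply/eqP; rewrite -subv0; apply/subvP => x.
rewrite memv_cap memv_ker lfunE /= => /andP [xK] /eqP e; rewrite memv0.
by apply: contraLR isT => x0; have := th_nz a5 tK dK xK x0; rewrite e eqxx.
Qed.
End S.

Section C.
Variables (F : finFieldType) (L : fieldExtType F).
Local Notation q := #|F|.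
Local Notation T := (finvect_type L).

Lemma cardK (K : {vspace L}) : #|[set x : T | x \in K]| = (q ^ \dim K)%N.
Proof.
rewrite cardsE. have := card_vspace (K : {vspace T}). move=> <-. by apply: eq_card => x.
Qed.

Lemma cardKn (K : {vspace L}) : #|[set x : T | (x \in K) && (x != 0)]| = (q ^ \dim K - 1)%N.
Proof.
rewrite -cardK [#|[set x : T | x \in K]|](cardsD1 (0 : T)) inE mem0v add1n subn1 /=.
by apply: eq_card => x; rewrite !inE andbC.
Qed.

Lemma card_code (K : {subfield L}) g : (5 <= adjoin_degree K g)%N -> (2 <= \dim K)%N ->
 code_card (code3p6 K g) (((q ^ \dim K - 1) ^ 2 * (q ^ \dim {:L} - 1)) %/ (q - 1)).
Proof.
move=> a5 k2.
pose A := [set x : T | (x \in K) && (x != 0)].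
pose B := [set x : T | (x \in fullv) && (x != 0)].
pose P := setX (setX A A) B.
pose f (i : T * T * T) := vmul (i.2 : L) (Utd K g (i.1.1 : L) (i.1.2 : L)).
pose s0 := [seq f i | i <- enum P].
have sz0 : size s0 = ((q ^ \dim K - 1) ^ 2 * (q ^ \dim {:L} - 1))%N.
  by rewrite size_map -cardE !cardsX !cardKn mulnn.
have cnt : forall V, V \in s0 -> count_mem V s0 = (q - 1)%N.
  move=> V /mapP [i0]; rewrite mem_enum => Pi0 ->.
  move: (Pi0); rewrite !inE => /andP [/andP [/andP [tK t0] /andP [dK d0]] /andP [_ a0]].
  rewrite count_map count_enumP.
  pose h (c : F) : T * T * T := (i0.1, (c%:A * (i0.2 : L) : T)).
  have hinj : injective h.
    move=> c c' /(congr1 (fun i : T * T * T => (i.2 : L))) /= /(mulIf a0).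
    by move/eqP; rewrite -subr_eq0 -scalerBl scaler_eq0 oner_eq0 orbF subr_eq0 => /eqP.
  rewrite subn1 -(cardsC1 (0 : F)) -(card_imset _ hinj); apply: eq_card => i.
  have dK2 : forall j, j \in P -> \dim (f j) = \dim K.
    move=> j; rewrite !inE => /andP [/andP [/andP [jtK _] /andP [jdK _]] /andP [_ ja0]].
    by rewrite /f dim_vmul // dim_Utd.
  apply/idP/idP.
    case/andP => Pi /eqP efi; have {}Pi : i \in P := Pi.
    move: (Pi); rewrite !inE => /andP [/andP [/andP [tK' t0'] /andP [dK' d0']] /andP [_ a0']].
    have [|[et ed [c ec]]] := main a5 tK' dK' tK dK d0' d0 a0' a0.
      by rewrite -/(f i) -/(f i0) efi capvv (dK2 _ Pi0) leqNgt k2.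
    apply/imsetP; exists c.
      by rewrite !inE; apply: contraNneq a0' => c0; rewrite ec c0 scale0r mul0r.
    rewrite /h [i]surjective_pairing [i.1]surjective_pairing et ed ec /=.
    by rewrite -surjective_pairing.
  case/imsetP => c; rewrite !inE => c0 ->.
  rewrite /h /=; apply/andP; split; last by rewrite /f /= vmulZ.
  suff : (i0.1, (c%:A * i0.2 : T)) \in P by [].
  rewrite !inE /= tK t0 dK d0 memvf /=.
  by rewrite mulf_neq0 // scaler_eq0 oner_eq0 orbF.
exists (undup s0); split.
- exact: undup_uniq.
- rewrite -sz0 (size_undup_const cnt) mulnK // subn_gt0; exact: finNzRing_gt1.
- move=> V; rewrite mem_undup; split.
    case/mapP => i; rewrite mem_enum !inE => /andP [/andP [/andP [tK t0] /andP [dK d0]] /andP [_ a0]] ->.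
    by exists (i.1.1 : L), (i.1.2 : L); split => //; exists (i.2 : L).
  case=> t [d [tK t0 dK d0 [al al0 ->]]].
  apply/mapP; exists ((t, d), al); last by [].
  by rewrite mem_enum !inE /= tK t0 dK d0 memvf al0.
Qed.

Lemma exists_notF (K : {vspace L}) : (2 <= \dim K)%N -> exists2 x, x \in K & x \notin 1%VS.
Proof.
move=> k2; case: (classic (exists2 x, x \in K & x \notin 1%VS)) => // nh.
have : (K <= 1%VS)%VS.
  apply/subvP => x xK; case: (boolP (x \in 1%VS)) => // xn; by case: nh; exists x.
by move/dimvS; rewrite dimv1 => h; move: (leq_trans k2 h).
Qed.

Lemma dimC (K : {subfield L}) g V : (5 <= adjoin_degree K g)%N -> code3p6 K g V -> \dim V = \dim K.
Proof.
move=> a5 [t [d [tK t0 dK d0 [al al0 ->]]]]; by rewrite dim_vmul // dim_Utd.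
Qed.

Lemma md_lower (K : {subfield L}) g U V : (5 <= adjoin_degree K g)%N ->
  code3p6 K g U -> code3p6 K g V -> U != V -> (2 * \dim K - 2 <= subspace_dist U V)%N.
Proof.
move=> a5 CU CV; rewrite /subspace_dist (dimC a5 CU) (dimC a5 CV).
move: CU CV => [t [d [tK t0 dK d0 [al al0 eU]]]] [t' [d' [t'K t'0 d'K d'0 [be be0 eV]]]] UV.
have [h|[et ed [c ec]]] := main a5 tK dK t'K d'K d0 d'0 al0 be0.
  rewrite -eU -eV in h; move: h; set m := \dim _; set k := \dim K => h.
  move: h; clear; move=> h; lia.
case/eqP: UV; rewrite eU eV et ed ec vmulZ //.
by apply: contraNneq al0 => c0; rewrite ec c0 scale0r mul0r.
Qed.

Lemma pair_ok (K : {subfield L}) g t d t' d' al be u v :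
  (5 <= adjoin_degree K g)%N -> (2 <= \dim K)%N ->
  t \in K -> d \in K -> t' \in K -> d' \in K -> t != 0 -> d != 0 -> t' != 0 -> d' != 0 ->
  al != 0 -> be != 0 -> u \in K -> v \in K ->
  al * th t d g u = be * th t' d' g v -> al * th t d g u != 0 ->
  ~ [/\ t = t', d = d' & exists c : F, al = c%:A * be] ->
  exists U V, [/\ code3p6 K g U, code3p6 K g V, U != V & subspace_dist U V = (2 * \dim K - 2)%N].
Proof.
move=> a5 k2 tK dK t'K d'K t0 d0 t'0 d'0 al0 be0 uK vK e w0 nh.
exists (vmul al (Utd K g t d)), (vmul be (Utd K g t' d')).
have CU : code3p6 K g (vmul al (Utd K g t d)) by exists t, d; split => //; exists al.
have CV : code3p6 K g (vmul be (Utd K g t' d')) by exists t', d'; split => //; exists be.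
have cap1 : (\dim (vmul al (Utd K g t d) :&: vmul be (Utd K g t' d')) <= 1)%N.
  by have [//|h] := main a5 tK dK t'K d'K d0 d'0 al0 be0; case: nh.
have cap0 : (1 <= \dim (vmul al (Utd K g t d) :&: vmul be (Utd K g t' d')))%N.
  apply: (@leq_trans (\dim <[al * th t d g u]>)); first by rewrite dim_vline w0.
  apply: dimvS; rewrite -memvE memv_cap.
  apply/andP; split; apply/vmulE.
    by exists (th t d g u) => //; apply/memUtd; exists u.
  by exists (th t' d' g v); [apply/memUtd; exists v | ].
split => //.
  apply/negP => /eqP E; move: cap1; rewrite E capvv (dimC a5 CV) => h.
  by move: (leq_trans k2 h).
rewrite /subspace_dist (dimC a5 CU) (dimC a5 CV).
have -> : \dim (vmul al (Utd K g t d) :&: vmul be (Utd K g t' d')) = 1%N.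
  by apply/eqP; rewrite eqn_leq cap1 cap0.
by rewrite muln1 mul2n addnn.
Qed.
End C.

Unset Implicit Arguments. Set Strict Implicit.

Theorem lemma3p6 (F : finFieldType) (L : fieldExtType F) (k r : nat)
  (K : {subfield L}) (gamma : L) (p : {poly subvs_of K}) :
  (2 <= k)%N -> (4 < r)%N ->
  \dim {:L} = (r * k)%N ->
  \dim K = k ->
  irreducible_poly p -> size p = r.+1 -> root (map_poly vsval p) gamma ->
  let q := #|F| in
  let n := (r * k)%N in
  let C := code3p6 K gamma in
  [/\ code_nonempty C, cyclic_code C, constant_dimension C,
      code_card C (((q ^ k - 1) ^ 2 * (q ^ n - 1)) %/ (q - 1))%N
    & min_distance C (2 * k - 2)%N].
Proof.
move=> k2 r4 dL dK irr sp rt q n C.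
have a5 : (5 <= adjoin_degree K gamma)%N by rewrite (adj_deg irr sp rt).
have k2' : (2 <= \dim K)%N by rewrite dK.
split.
- exists (vmul 1 (Utd K gamma 1 1)); exists 1, 1; split; rewrite ?mem1v ?oner_eq0 //.
  by exists 1; rewrite ?oner_eq0.
- exists (fun U => exists t d, [/\ t \in K, t != 0, d \in K, d != 0 & U = Utd K gamma t d]).
  move=> V; split.
    by case=> t [d [tK t0 dK0 d0 o]]; exists (Utd K gamma t d) => //; exists t, d.
  by case=> U [t [d [tK t0 dK0 d0 ->]]] o; exists t, d.
- by exists k => V CV; rewrite (dimC a5 CV) dK.
- by have := card_code a5 k2'; rewrite dK dL.
rewrite -dK; split; last by move=> U V CU CV UV; exact: md_lower a5 CU CV UV.
have [x xK xF] := exists_notF k2'.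
have x0 : x != 0 by apply: contraNneq xF => ->; exact: mem0v.
have oneF : (1 : L) \in 1%VS by exact: memv_line.
have K1 : (1 : L) \in K by exact: mem1v.
have [h2|h2] := eqVneq (1 + 1 : L) 0.
  have x1 : x != 1 by apply: contraNneq xF => ->.
  apply: (@pair_ok F L K gamma 1 1 1 x 1 1 1 1) => //; rewrite ?oner_eq0 //.
  - by rewrite /th expr1n h2 !mul0r.
  - by rewrite /th expr1n h2 !mul0r !addr0 mulr1 oner_eq0.
  - by case=> _ ex _; move: x1; rewrite -ex eqxx.
have [b [bK bF ab0]] : exists b, [/\ b \in K, b \notin 1%VS & b ^+ #|F| + b != 0].
  have [hx|hx] := eqVneq (x ^+ #|F| + x) 0; last by exists x.
  exists (x + 1); split.
  - by rewrite rpredD.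
  - apply: contra xF => h; have -> : x = (x + 1) - 1 by ring.
    by rewrite rpredB.
  - by rewrite frobD expr1n addrACA hx add0r.
have b0 : b != 0 by apply: contraNneq bF => ->; exact: mem0v.
have abK : b ^+ #|F| + b \in K by rewrite rpredD ?rpredX.
have bbK : (1 + 1) * b \in K by rewrite rpredM ?rpredD.
have bb0 : (1 + 1) * b != 0 by rewrite mulf_neq0.
apply: (@pair_ok F L K gamma (b ^+ #|F| + b) (b ^+ #|F| + b) ((1 + 1) * b) ((1 + 1) * b) b 1 1 b) => //; rewrite ?oner_eq0 //.
- by rewrite /th expr1n; ring.
- by rewrite mulf_neq0 // (th_nz a5) ?oner_eq0.
- case=> _ _ [c]; rewrite mulr1 => ec; move: bF; rewrite ec.
  by rewrite memvZ.
Qed.
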